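(* Let $k\ge 2$ and $n\ge 1$ be integers and $x=\zeta_k$. Let $S=\mathrm{circ}(s_0,\dots,s_{k-1})\in\mathrm{BH}(k,k)$ be a circulant matrix, and for $0\le m\le k-1$ let $\lambda_m=\sum_{j=0}^{k-1}s_jx^{mj}$ be its eigenvalues. Suppose $H\in\mathrm{BH}(kn+k,k)$ has the block form \[H=\begin{pmatrix} S & F_k\otimes j_n\\ F_k^{\ast}\otimes j_n^{\top} & A\end{pmatrix},\] where $A=[A_{ij}]_{0\le i,j\le k-1}$ is a $kn\times kn$ matrix partitioned into $n\times n$ blocks $A_{ij}$. Then (1) for $i\neq j$, the entries of every row and of every column of $A_{ij}$ sum to $0$; (2) for each $0\le m\le k-1$, the entries of every row and of every column of $A_{mm}$ sum to $-\overline{\lambda_m}$.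
   Context: $\zeta_k=e^{2\pi\sqrt{-1}/k}$. A complex Hadamard matrix of order $N$ is an $N\times N$ matrix $H$ with all entries of modulus $1$ and $HH^{\ast}=NI_N$, where $^{\ast}$ is conjugate transpose. $\mathrm{BH}(N,k)$ denotes the set of $N\times N$ complex Hadamard matrices with all entries $k$-th roots of unity. $\mathrm{circ}(s_0,\dots,s_{k-1})$ is the $k\times k$ matrix whose $(i,j)$ entry ($0\le i,j\le k-1$) is $s_{(j-i)\bmod k}$, i.e. first row $(s_0,\dots,s_{k-1})$ and each subsequent row the cyclic shift one place to the right of the previous. $F_k=[x^{(i-1)(j-1)}]_{1\le i,j\le k}$ is the Fourier matrix, $j_n$ is the all-ones row vector of length $n$, $j_n^\top$ its transpose, and $\otimes$ is the Kronecker product $A\otimes B=[a_{ij}B]$. *)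

(* Defs.v *)
(* complex numbers are R[i] (real_closed.complex) over an
   abstract R : realType (mathcomp-analysis), so that cos, sin, pi exist. *)
From HB Require Import structures.
From mathcomp Require Import all_boot all_order all_algebra.
From mathcomp Require Import reals trigo.
From mathcomp Require Import complex mxtens.
Set Implicit Arguments. Unset Strict Implicit. Unset Printing Implicit Defensive.
Import Order.TTheory GRing.Theory Num.Theory.
Local Open Scope ring_scope.

Definition zeta (R : realType) (k : nat) : R[i] :=
  Complex (cos (2 * pi / k%:R)) (sin (2 * pi / k%:R)).

Definition ctmx (C : numClosedFieldType) (m n : nat) (M : 'M[C]_(m, n)) : 'M[C]_(n, m) :=
  map_mx Num.conj M^T.

Definition is_BH (C : numClosedFieldType) (N k : nat) (H : 'M[C]_N) : Prop :=
  (forall i j, H i j ^+ k = 1) /\ H *m ctmx H = N%:R%:M.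

Definition circ (C : pzRingType) (k : nat) (s : nat -> C) : 'M[C]_k :=
  \matrix_(i < k, j < k) s ((j + k - i) %% k)%N.

Definition Fourier (C : pzRingType) (k : nat) (x : C) : 'M[C]_k :=
  \matrix_(i < k, j < k) x ^+ (i * j)%N.

Definition jrow (C : pzRingType) (n : nat) : 'M[C]_(1, n) := const_mx 1.

(* the block (i,j) of an (k n) x (k n) matrix partitioned into n x n blocks;
   mxtens_index (i, r) is the index i * n + r, matching the Kronecker
   product tensmx (A *t B) of real_closed.mxtens *)
Definition mxblk (C : pzRingType) (k n : nat) (A : 'M[C]_(k * n)) (i j : 'I_k) : 'M[C]_n :=
  \matrix_(r < n, c < n) A (mxtens_index (i, r)) (mxtens_index (j, c)).
Arguments is_BH {C} N k H.

(* Main.v *)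
Require Import Defs.
From HB Require Import structures.
From mathcomp Require Import all_boot all_order all_algebra.
From mathcomp Require Import reals trigo.
From mathcomp Require Import complex mxtens.
From mathcomp Require Import zify.
Import Order.TTheory GRing.Theory Num.Theory.
Local Open Scope ring_scope.

Lemma sum_tens (C : nmodType) m n (f : 'I_(m * n) -> C) :
  \sum_(u < m * n) f u = \sum_(i < m) \sum_(j < n) f (mxtens_index (i, j)).
Proof.
rewrite pair_big /= (reindex (@mxtens_index m n)) /=.
  by apply: eq_bigr => -[i j].
by exists (@mxtens_unindex m n) => i _; rewrite (mxtens_indexK, mxtens_unindexK).
Qed.

Lemma ctmxE (C : numClosedFieldType) m n (M : 'M[C]_(m, n)) i j :
  ctmx M i j = Num.conj (M j i).
Proof. by rewrite !mxE. Qed.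

Section Gen.
Variable C : numClosedFieldType.
Variables (k n : nat) (s : nat -> C) (A : 'M[C]_(k * n)) (x : C).
Variable F : 'M[C]_k.
Variable S : 'M[C]_k.
Let H : 'M[C]_(k + k * n) :=
    block_mx S
      (castmx (muln1 k, erefl (k * n)%N) (tensmx F (jrow C n)))
      (castmx (erefl (k * n)%N, muln1 k) (tensmx (ctmx F) (jrow C n)^T))
      A.

Lemma HUL a q : H (lshift _ a) (lshift _ q) = S a q.
Proof. by rewrite /H block_mxEul. Qed.
Lemma HUR a u : H (lshift _ a) (rshift _ u) = F a (mxtens_unindex u).1.
Proof.
rewrite /H block_mxEur castmxE /= !mxE mulr1.
congr (F _ _); apply: val_inj => /=; [exact: divn1|by []]. Qed.
Lemma HDL u a : H (rshift _ u) (lshift _ a) = Num.conj (F a (mxtens_unindex u).1).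
Proof.
rewrite /H block_mxEdl castmxE /= [LHS]mxE !mxE mulr1.
congr (Num.conj (F _ _)); apply: val_inj => /=; [exact: divn1|by []]. Qed.
Lemma HDR u v : H (rshift _ u) (rshift _ v) = A u v.
Proof. by rewrite /H block_mxEdr. Qed.

Definition Rc (c : 'I_n) : 'M[C]_k :=
  \matrix_(b, b') \sum_(c' < n) A (mxtens_index (b, c)) (mxtens_index (b', c')).
Definition Cc (c : 'I_n) : 'M[C]_k :=
  \matrix_(b', b) \sum_(r < n) A (mxtens_index (b', r)) (mxtens_index (b, c)).

Lemma eqR (N : nat) : H *m ctmx H = N%:R%:M -> forall c,
  S *m F + F *m (\matrix_(b', b) Num.conj (Rc c b b')) = 0.
Proof.
move=> hHG c; apply/matrixP => a b.
have := congr1 (fun M : 'M[C]_(k + k * n) => M (lshift _ a) (rshift _ (mxtens_index (b, c)))) hHG.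
rewrite mxE big_split_ord /=.
under eq_bigr => q _ do rewrite ctmxE HUL HDL conjCK mxtens_indexK.
under [X in _ + X = _]eq_bigr => u _ do rewrite ctmxE HUR HDR.
rewrite sum_tens mxE eq_lrshift mulr0n => h; rewrite [RHS]mxE -h.
rewrite !mxE; congr (_ + _).
apply: eq_bigr => b' _; rewrite !mxE rmorph_sum mulr_sumr.
by apply: eq_bigr => c' _; rewrite mxtens_indexK.
Qed.

Lemma eqC (N : nat) : ctmx H *m H = N%:R%:M -> forall c,
  ctmx F *m S + (\matrix_(b, b') Num.conj (Cc c b' b)) *m ctmx F = 0.
Proof.
move=> hHG c; apply/matrixP => b a.
have := congr1 (fun M : 'M[C]_(k + k * n) => M (rshift _ (mxtens_index (b, c))) (lshift _ a)) hHG.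
rewrite mxE big_split_ord /=.
under eq_bigr => q _ do rewrite ctmxE HUL HUR mxtens_indexK.
under [X in _ + X = _]eq_bigr => u _ do rewrite ctmxE HDL HDR.
rewrite sum_tens mxE eq_rlshift mulr0n => h; rewrite [RHS]mxE -h.
rewrite !mxE; congr (_ + _).
  by apply: eq_bigr => q _; rewrite !mxE.
apply: eq_bigr => b' _; rewrite !mxE rmorph_sum mulr_suml.
by apply: eq_bigr => c' _; rewrite mxtens_indexK.
Qed.

Lemma eqFF : (0 < n)%N -> S *m ctmx S = k%:R%:M ->
  H *m ctmx H = (k + k * n)%:R%:M -> F *m ctmx F = k%:R%:M.
Proof.
move=> n0 hS hHG; apply/matrixP => a a'.
have := congr1 (fun M : 'M[C]_(k + k * n) => M (lshift _ a) (lshift _ a')) hHG.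
rewrite mxE big_split_ord /=.
under eq_bigr => q _ do rewrite ctmxE !HUL.
under [X in _ + X = _]eq_bigr => u _ do rewrite ctmxE !HUR.
have -> : \sum_(i < k) S a i * (S a' i)^* = (S *m ctmx S) a a'.
  by rewrite mxE; apply: eq_bigr => i _; rewrite ctmxE.
rewrite hS sum_tens.
under eq_bigr => i _ do (under eq_bigr => j _ do rewrite mxtens_indexK /=; rewrite sumr_const card_ord).
have -> : \sum_i F a i * (F a' i)^* *+ n = (F *m ctmx F) a a' *+ n.
  by rewrite sumrMnl mxE; congr (_ *+ _); apply: eq_bigr => i _; rewrite ctmxE.
rewrite !mxE eq_shift natrD mulrnDl => /addrI.
rewrite natrM mulrnAl -[in RHS]mulr_natr => /eqP.
move=> /eqP h; apply: (@mulIf _ n%:R); first by rewrite pnatr_eq0 -lt0n.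
rewrite mulr_natr h.
by case: (a == a'); rewrite ?mulr1n ?mulr0n ?mul0r // mul1r mulrC.
Qed.
End Gen.

Lemma ctmx_comm (C : numClosedFieldType) m (M : 'M[C]_m) (c : C) :
  c != 0 -> M *m ctmx M = c%:M -> ctmx M *m M = c%:M.
Proof.
move=> c0 h.
have h1 : M *m (c^-1 *: ctmx M) = 1%:M.
  by rewrite -scalemxAr h scale_scalar_mx mulVf.
have := mulmx1C h1; rewrite -scalemxAl => /(congr1 (fun X => c *: X)).
by rewrite scalerA mulfV // scale1r => ->; rewrite scale_scalar_mx mulr1.
Qed.

Lemma cancel_l (C : fieldType) m (P Q X Y : 'M[C]_m) (c : C) :
  c != 0 -> Q *m P = c%:M -> P *m X = P *m Y -> X = Y.
Proof.
move=> c0 hQ h; have := congr1 (mulmx Q) h.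
rewrite !mulmxA hQ !mul_scalar_mx => /(congr1 (fun Z => c^-1 *: Z)).
by rewrite !scalerA mulVf // !scale1r.
Qed.

Lemma cancel_r (C : fieldType) m (P Q X Y : 'M[C]_m) (c : C) :
  c != 0 -> P *m Q = c%:M -> X *m P = Y *m P -> X = Y.
Proof.
move=> c0 hQ h; have := congr1 (mulmx^~ Q) h.
rewrite /= -!mulmxA hQ !mul_mx_scalar => /(congr1 (fun Z => c^-1 *: Z)).
by rewrite !scalerA mulVf // !scale1r.
Qed.

Lemma circF (C : comPzRingType) k (s : nat -> C) (x : C) : (0 < k)%N -> x ^+ k = 1 ->
  circ k s *m Fourier k x =
  Fourier k x *m \matrix_(i < k, j < k) ((i == j)%:R * \sum_(j' < k) s j' * x ^+ (i * j')).
Proof.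
move=> k0 xk; apply/matrixP => a b; rewrite mxE [RHS]mxE.
rewrite [RHS](bigD1 b) //= [X in _ = _ + X]big1 ?addr0; last first.
  by move=> i /negPf ib; rewrite mxE ib mul0r mulr0.
rewrite mxE eqxx mul1r [Fourier _ _ _ _]mxE mulr_sumr.
have hk (i : nat) : (i %% k < k)%N by rewrite ltn_mod.
rewrite (reindex (fun j : 'I_k => Ordinal (hk (a + j)%N))) /=; last first.
  exists (fun q : 'I_k => Ordinal (hk (q + (k - a))%N)) => q _; apply: val_inj => /=.
    rewrite modnDml (_ : (a + q + (k - a) = q + k)%N); last by have := ltn_ord a; lia.
    by rewrite modnDr modn_small.
  rewrite modnDmr (_ : (a + (q + (k - a)) = q + k)%N); last by have := ltn_ord a; lia.
  by rewrite modnDr modn_small.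
apply: eq_bigr => j _; rewrite !mxE /=.
have -> : (((a + j) %% k + k - a) %% k = j)%N.
  rewrite -addnBA ?(ltnW (ltn_ord a)) // modnDml.
  rewrite (_ : (a + j + (k - a) = j + k)%N); last by have := ltn_ord a; lia.
  by rewrite modnDr modn_small.
rewrite [RHS]mulrCA -exprD -(expr_mod _ xk) modnMml expr_mod //.
by rewrite mulnDl [(j * b)%N]mulnC.
Qed.

Lemma Lam_entry (C : numClosedFieldType) k (M : 'M[C]_k) (l : 'I_k -> C) (f : 'I_k -> 'I_k -> C) :
  \matrix_(b', b) Num.conj (f b b') = M ->
  M = - \matrix_(i < k, j < k) ((i == j)%:R * l i) ->
  forall i j, f i j = - ((i == j)%:R * Num.conj (l i)).
Proof.
move=> <- /matrixP h i j; have := h j i; rewrite !mxE => /(congr1 Num.conj).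
rewrite conjCK => ->; rewrite rmorphN rmorphM /= conjC_nat eq_sym.
by case: eqP => [->|]; rewrite ?mul0r.
Qed.

Theorem theorem5p3 (R : realType) (k n : nat) (s : nat -> R[i])
    (A : 'M[R[i]]_(k * n)) :
  (2 <= k)%N -> (1 <= n)%N ->
  let x := zeta R k in
  let S := circ k s in
  is_BH k k S ->
  let H : 'M[R[i]]_(k + k * n) :=
    block_mx S
      (castmx (muln1 k, erefl (k * n)%N) (tensmx (Fourier k x) (jrow R[i] n)))
      (castmx (erefl (k * n)%N, muln1 k) (tensmx (ctmx (Fourier k x)) (jrow R[i] n)^T))
      A in
  is_BH (k + k * n) k H ->
  (forall i j : 'I_k, i != j ->
     (forall r : 'I_n, \sum_(c < n) mxblk A i j r c = 0) /\
     (forall c : 'I_n, \sum_(r < n) mxblk A i j r c = 0)) /\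
  (forall m : 'I_k,
     let lambda := \sum_(j < k) s j * x ^+ (m * j)%N in
     (forall r : 'I_n, \sum_(c < n) mxblk A m m r c = - Num.conj lambda) /\
     (forall c : 'I_n, \sum_(r < n) mxblk A m m r c = - Num.conj lambda)).
Proof.
move=> k2 n1 x S [_ hSS] H [hpow hHH].
set F := Fourier k x.
have k0 : (0 < k)%N by apply: leq_trans k2.
have o1 : (1 < k)%N by [].
have xk : x ^+ k = 1.
  have := hpow (lshift _ (Ordinal o1)) (rshift _ (mxtens_index (Ordinal o1, Ordinal n1))).
  rewrite /H HUR mxtens_indexK /= mxE /=.
  by rewrite mul1n.
have kn0 : (k%:R : R[i]) != 0 by rewrite pnatr_eq0 -lt0n.
have Nn0 : ((k + k * n)%:R : R[i]) != 0 by rewrite pnatr_eq0 addn_eq0 negb_and -lt0n k0.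
have hFF : F *m ctmx F = k%:R%:M := @eqFF _ k n A F S n1 hSS hHH.
have hF'F : ctmx F *m F = k%:R%:M := @ctmx_comm _ _ F _ kn0 hFF.
have hH'H : ctmx H *m H = (k + k * n)%:R%:M := @ctmx_comm _ _ H _ Nn0 hHH.
have hSF := @circF _ k s x k0 xk.
rewrite -/x -/F -/S in hSF.
set Lam := \matrix_(i < k, j < k) _ in hSF.
have rowE (c : 'I_n) (i j : 'I_k) : @Rc _ k n A c i j = - ((i == j)%:R * Num.conj (\sum_(j' < k) s j' * x ^+ (i * j'))).
  move: i j; apply: (@Lam_entry _ k _ (fun i => \sum_(j' < k) s j' * x ^+ (i * j')) (fun i j => @Rc _ k n A c i j) erefl).
  apply: (@cancel_l _ k F (ctmx F) _ _ k%:R kn0 hF'F).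
  rewrite mulmxN -hSF; apply/eqP; rewrite -addr_eq0 addrC.
  by apply/eqP; apply: (@eqR _ k n A F S _ hHH c).
have colE (c : 'I_n) (i j : 'I_k) : @Cc _ k n A c i j = - ((i == j)%:R * Num.conj (\sum_(j' < k) s j' * x ^+ (i * j'))).
  move: i j; apply: (@Lam_entry _ k _ (fun i => \sum_(j' < k) s j' * x ^+ (i * j')) (fun i j => @Cc _ k n A c i j) erefl).
  have hFS : ctmx F *m S = Lam *m ctmx F.
    apply: (@cancel_r _ k F (ctmx F) _ _ k%:R kn0 hFF).
    by rewrite -mulmxA hSF mulmxA hF'F -mulmxA hF'F scalar_mxC.
  apply: (@cancel_r _ k (ctmx F) F _ _ k%:R kn0 hF'F).
  rewrite mulNmx -hFS; apply/eqP; rewrite -addr_eq0 addrC.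
  by apply/eqP; apply: (@eqC _ k n A F S _ hH'H c).
split.
  move=> i j /negPf ij; split=> [r|c].
    by rewrite -[RHS]oppr0; have := rowE r i j; rewrite ij mul0r mxE => <-; apply: eq_bigr => c _; rewrite mxE.
  by rewrite -[RHS]oppr0; have := colE c i j; rewrite ij mul0r mxE => <-; apply: eq_bigr => r _; rewrite mxE.
move=> m lambda; split=> [r|c].
  by have := rowE r m m; rewrite eqxx mul1r mxE => <-; apply: eq_bigr => c _; rewrite mxE.
by have := colE c m m; rewrite eqxx mul1r mxE => <-; apply: eq_bigr => r _; rewrite mxE.
Qed.
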